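(* Let $p,q$ be primes with $q>p\geq 5$. There are only finitely many triples $(\{x,y\},p,q)$ for which there exists a regular map $\mathcal{M}(G;r,t,\ell)$ of type $\{x,y\}$ with Euler characteristic $-pq$ such that $pq$ divides $|G|$.
   Context: A regular map is given algebraically as a quadruple $\mathcal{M}=\mathcal{M}(G;r,t,\ell)$ where $G$ is a finite group generated by three involutions $r,t,\ell$ with $t\ell=\ell t$. Its type is $\{|rt|,|r\ell|\}$, and its Euler characteristic is $\chi=-\frac{|G|(xy-2x-2y)}{4xy}$ where $x=|rt|$, $y=|r\ell|$. *)

(* Defs.v *)
From HB Require Import structures.
From mathcomp Require Import all_boot all_order all_algebra all_fingroup.
Set Implicit Arguments. Unset Strict Implicit. Unset Printing Implicit Defensive.
Import GRing.Theory Num.Theory.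

Definition regular_map (gT : finGroupType) (G : {group gT}) (r t l : gT) : Prop :=
  [/\ [/\ r \in G, t \in G & l \in G],
      [/\ #[r]%g = 2%N, #[t]%g = 2%N & #[l]%g = 2%N],
      t * l = l * t
    & G :=: <<[set r; t; l]>>]%g.

Definition map_type (gT : finGroupType) (r t l : gT) : nat * nat :=
  (#[r * t]%g, #[r * l]%g).

Definition euler_char (gT : finGroupType) (G : {group gT}) (r t l : gT) : rat :=
  let x : rat := (#[r * t]%g)%:R%R in let y : rat := (#[r * l]%g)%:R%R in
  (- ((#|G|)%:R * (x * y - 2 * x - 2 * y)) / (4 * x * y))%R.

(* Main.v *)
Require Import Defs.
From HB Require Import structures.
From mathcomp Require Import all_boot all_order all_algebra all_fingroup.
From mathcomp Require Import all_solvable.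
From mathcomp Require Import zify ring lra.
Set Implicit Arguments. Unset Strict Implicit. Unset Printing Implicit Defensive.

Section Arith.
Local Open Scope nat_scope.
Lemma sum_prod k x y : k <= x -> k <= y -> k * (x + y) <= 2 * (x * y).
Proof.
move=> kx ky.
have h1 : k * y <= x * y by rewrite leq_mul2r kx orbT.
have h2 : k * x <= y * x by rewrite leq_mul2r ky orbT.
lia.
Qed.

Lemma bound_m k m x y : k <= x -> k <= y -> 0 < x ->
  (m - 4) * (x * y) = 2 * m * (x + y) -> k * (m - 4) <= 4 * m.
Proof.
move=> kx ky x0 mn.
have h := sum_prod kx ky.
set P := x * y in mn h; set S := x + y in mn h.
have S0 : 0 < S by rewrite /S; lia.
have : (k * (m - 4)) * S <= (4 * m) * S.
  have -> : 4 * m * S = 2 * ((m - 4) * P) by rewrite mn; lia.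
  have : (m - 4) * (k * S) <= (m - 4) * (2 * P) by rewrite leq_mul2l h orbT.
  lia.
by rewrite leq_pmul2r.
Qed.

Lemma arith1 m x y : 0 < x -> 0 < y ->
  m * x * y = 4 * x * y + 2 * m * x + 2 * m * y ->
  [/\ 5 <= m, m <= 84, 3 <= x, 3 <= y & (x <= 20 \/ y <= 20)].
Proof.
move=> x0 y0 E.
have m5 : 5 <= m.
  case: (leqP 5 m) => // hm.
  have : m * x * y <= 4 * x * y by rewrite -!mulnA leq_mul2r; apply/orP; right; lia.
  rewrite E. nia.
have x3 : 3 <= x.
  case: (leqP 3 x) => // hx.
  have : x = 1 \/ x = 2 by lia.
  case=> ex; subst x; nia.
have y3 : 3 <= y.
  case: (leqP 3 y) => // hy.
  have : y = 1 \/ y = 2 by lia.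
  case=> ey; subst y; nia.
have mn : (m - 4) * (x * y) = 2 * m * (x + y).
  rewrite mulnBl; lia.
split => //.
- case: (leqP m 84) => // hm.
  have : x = 3 \/ x = 4 \/ 5 <= x by lia.
  case=> [ex|[ex|x5]].
  + subst x.
    have E3 : m * y = 12 * y + 6 * m by lia.
    case: (leqP y 6) => hy.
      have : m * y <= m * 6 by rewrite leq_mul2l hy orbT.
      lia.
    have : 85 * (y - 6) <= m * (y - 6) by rewrite leq_mul2r hm orbT.
    rewrite !mulnBr. lia.
  + subst x.
    have E3 : m * y = 8 * y + 4 * m by lia.
    case: (leqP y 4) => hy.
      have : m * y <= m * 4 by rewrite leq_mul2l hy orbT.
      lia.
    have : 85 * (y - 4) <= m * (y - 4) by rewrite leq_mul2r hm orbT.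
    rewrite !mulnBr. lia.
  have : y = 3 \/ y = 4 \/ 5 <= y by lia.
  case=> [ey|[ey|y5]].
  + subst y.
    have E3 : m * x = 12 * x + 6 * m by lia.
    case: (leqP x 6) => hx.
      have : m * x <= m * 6 by rewrite leq_mul2l hx orbT.
      lia.
    have : 85 * (x - 6) <= m * (x - 6) by rewrite leq_mul2r hm orbT.
    rewrite !mulnBr. lia.
  + subst y.
    have E3 : m * x = 8 * x + 4 * m by lia.
    case: (leqP x 4) => hx.
      have : m * x <= m * 4 by rewrite leq_mul2l hx orbT.
      lia.
    have : 85 * (x - 4) <= m * (x - 4) by rewrite leq_mul2r hm orbT.
    rewrite !mulnBr. lia.
  have := bound_m x5 y5 x0 mn. lia.
- case: (leqP x 20) => hx; first by left.
  case: (leqP y 20) => hy; first by right.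
  exfalso.
  have := bound_m hx hy x0 mn. lia.
Qed.

Lemma arith2 m x y : 0 < x -> 0 < y ->
  m * x * y = 4 * x * y + 2 * m * x + 2 * m * y ->
  [/\ 1 <= m, m <= 84, x <= 3400 & y <= 3400].
Proof.
move=> x0 y0 E.
have [m5 m84 x3 y3 hxy] := arith1 x0 y0 E.
have gen : forall a b, 0 < a -> 0 < b -> a <= 20 ->
    m * a * b = 4 * a * b + 2 * m * a + 2 * m * b -> b <= 3400.
  move=> a b a0 b0 ha Eab.
  have Eb : b * (m * a - (4 * a + 2 * m)) = 2 * m * a.
    rewrite mulnBr; lia.
  have c0 : 0 < m * a - (4 * a + 2 * m).
    case: (posnP (m * a - (4 * a + 2 * m))) => // c0.
    move: Eb; rewrite c0 muln0. lia.
  have : b <= 2 * m * a by rewrite -Eb leq_pmulr.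
  have : 2 * m * a <= 2 * 84 * 20 by rewrite leq_mul // leq_mul.
  lia.
case: hxy => h.
- have := gen x y x0 y0 h E. split => //; lia.
- have Ex : m * y * x = 4 * y * x + 2 * m * y + 2 * m * x by lia.
  have := gen y x y0 x0 h Ex. split => //; lia.
Qed.
Lemma big_mod1 A q : 1 < A -> A %% q = 1 -> q + 1 <= A.
Proof.
move=> A1 Am.
have := divn_eq A q; rewrite Am => EA.
case: (posnP (A %/ q)) => h; first by move: EA; rewrite h mul0n add0n => EA; lia.
have : q <= A %/ q * q by rewrite leq_pmull.
lia.
Qed.

Lemma split_dvd A p m q : prime p -> 0 < m -> m < q -> 1 < A -> A %% q = 1 ->
  A %| p * m -> exists d, [/\ A = p * d, 0 < d & d <= m].
Proof.
move=> pp m0 mq A1 Am dA.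
have qA := big_mod1 A1 Am.
case pA: (p %| A); last first.
  have cop : coprime A p by rewrite coprime_sym prime_coprime // pA.
  move: dA; rewrite Gauss_dvdr // => /(dvdn_leq m0). lia.
case/dvdnP: pA => d Ad.
have dm : d %| m.
  by move: dA; rewrite Ad mulnC dvdn_pmul2l ?prime_gt0.
exists d; split; first by rewrite mulnC.
  by case: (posnP d) Ad => // ->; lia.
exact: dvdn_leq.
Qed.

Lemma arith3 p q m A B : prime p -> prime q -> 168 < p -> p < q ->
  0 < m -> m <= 84 ->
  1 < A -> A %% q = 1 -> A %| p * m ->
  1 < B -> B %% p = 1 -> B %| q * m -> False.
Proof.
move=> pp pq p168 pltq m0 m84 A1 Am dA B1 Bm dB.
have mq : m < q by lia.
have mp : m < p by lia.
have [d [Ad d0 dm]] := split_dvd pp m0 mq A1 Am dA.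
have [d' [Bd d0' dm']] := split_dvd pq m0 mp B1 Bm dB.
have EA := divn_eq A q; rewrite Am in EA.
have EB := divn_eq B p; rewrite Bm in EB.
set k := A %/ q in EA; set k' := B %/ p in EB.
have kd : k < d.
  have h1 : p * d < q * d by rewrite ltn_mul2r d0 pltq.
  have : k * q < d * q by lia.
  by rewrite ltn_mul2r => /andP[].
have E : p * (d + k') = q * (k + d').
  rewrite !mulnDr; lia.
have cpq : coprime p q.
  by rewrite prime_coprime // dvdn_prime2 // neq_ltn pltq.
have : p %| k + d' by rewrite -(Gauss_dvdr _ cpq) -E dvdn_mulr.
move/dvdn_leq; lia.
Qed.
End Arith.

Section GroupPart.
Local Open Scope group_scope.
Lemma inv_invol (gT : finGroupType) (a : gT) : #[a] = 2%N -> a^-1 = a.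
Proof.
move=> oa; apply/eqP; rewrite eq_invg_mul.
have : a ^+ 2 = 1 by rewrite -oa expg_order.
by rewrite expgS expg1 => ->.
Qed.

Lemma pair_card (gT : finGroupType) (a b : gT) :
  #[a] = 2%N -> #[b] = 2%N -> (#|<<[set a; b]>>| %| 2 * #[a * b])%N.
Proof.
move=> oa ob.
have aV := inv_invol oa; have bV := inv_invol ob.
pose X := <[a * b]>%G; pose A := <[a]>%G.
have nXA : A \subset 'N(X).
  rewrite cycle_subG; apply/normP.
  rewrite -cycleJ /conjg aV !mulgA.
  have -> : a * a = 1 by rewrite -{1}aV mulVg.
  by rewrite mul1g -{1}aV -{1}bV -invMg cycleV.
have sD : <<[set a; b]>> \subset X <*> A.
  rewrite gen_subG; apply/subsetP=> z; rewrite !inE => /orP[]/eqP->.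
    by rewrite mem_gen // inE cycle_id orbT.
  have -> : b = a^-1 * (a * b) by rewrite mulgA mulVg mul1g.
  rewrite groupM ?groupV //.
    by rewrite mem_gen // inE cycle_id orbT.
  by rewrite mem_gen // inE cycle_id.
apply: dvdn_trans (cardSg sD) _.
rewrite /= (norm_joinEr nXA) mulnC.
rewrite -oa -[(#[a * b] * _)%N]/(#|X| * #|A|)%N mul_cardG.
by rewrite dvdn_mulr.
Qed.
Lemma conj_in (gT : finGroupType) (G S K D : {group gT}) :
  S <| G -> cyclic S -> S :&: K = 1 -> S * K = G -> D \subset G ->
  coprime #|S| #|D| -> exists2 x, x \in S & D \subset K :^ x.
Proof.
move=> nsSG cycS tiSK defG sDG coSD.
have [sSG nSG] := andP nsSG.
have nSD : D \subset 'N(S) := subset_trans sDG nSG.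
pose L := (S <*> D)%G.
have defL : (L :=: S * D)%g by rewrite /= norm_joinEr.
have sLG : L \subset G by rewrite join_subG sSG.
pose K' := (K :&: L)%G.
have defL' : S * K' = L.
  by rewrite /K' /= group_modl ?joing_subl // defG (setIidPr sLG).
have tiSK' : S :&: K' = 1.
  by apply/trivgP; rewrite -tiSK setIS // subsetIl.
have cardL1 : #|L| = (#|S| * #|D|)%N by rewrite defL TI_cardMg // coprime_TIg.
have cardL2 : #|L| = (#|S| * #|K'|)%N by rewrite -defL' TI_cardMg.
have eqDK : #|D| = #|K'|.
  by apply/eqP; rewrite -(eqn_pmul2l (cardG_gt0 S)) -cardL1 cardL2.
have [x Sx defD] : exists2 x, x \in S & D :=: K' :^ x.
  apply: (SchurZassenhaus_trans_sol (abelian_sol (cyclic_abelian cycS))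
   (subset_trans (subsetIr K L) (subset_trans sLG nSG)) _ _ eqDK).
  - by rewrite defL' /= joing_subr.
  - by rewrite -eqDK.
by exists x => //; rewrite defD conjSg subsetIl.
Qed.
Lemma conj_comm (gT : finGroupType) (k x : gT) : commute k x -> k ^ x = k.
Proof. by move=> c; rewrite conjgE c mulKg. Qed.

Lemma prime_gen (gT : finGroupType) (S : {group gT}) u :
  prime #|S| -> u \in S -> u != 1 -> S \subset <[u]>.
Proof.
move=> pS Su nu.
have sUS : <[u]> \subset S by rewrite cycle_subG.
have : #[u] %| #|S| by apply: cardSg.
case/primeP: pS => _ /[apply] /orP[|/eqP oS].
  by rewrite order_eq1 (negPf nu).
have : <[u]> == S :> {set gT} by rewrite eqEcard sUS /= -oS.
by move/eqP=> ->.
Qed.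

Lemma compl_int (gT : finGroupType) (G S K : {group gT}) x y z g :
  S <| G -> prime #|S| -> S :&: K = 1 -> K \subset G ->
  x \in S -> y \in S -> z \in S -> K :^ x != K :^ y ->
  g \in K :^ x -> g \in K :^ y -> g \in K :^ z.
Proof.
move=> nsSG pS tiSK sKG Sx Sy Sz neq gx gy.
have [sSG nSG] := andP nsSG.
set k := g ^ x^-1.
have Kk : k \in K by rewrite -(memJ_conjg _ x) /k conjgKV.
have gk : g = k ^ x by rewrite /k conjgKV.
set u := y * x^-1.
have Su : u \in S by rewrite groupM ?groupV.
have nu : u != 1.
  apply: contra neq => /eqP u1.
  by have -> : y = x by apply/eqP; rewrite eq_mulgV1 -/u u1.
have Kuk : k \in K :^ u.
  rewrite -(memJ_conjg _ x) -gk -conjsgM /u -mulgA mulVg mulg1 //.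
clearbody k u.
have Kk' : k ^ u^-1 \in K by rewrite -(memJ_conjg _ u) conjgKV.
have w1 : k^-1 * k ^ u^-1 = 1.
  suff : k^-1 * k ^ u^-1 \in S :&: K by rewrite tiSK => /set1P.
  rewrite inE [_ \in K]groupM ?groupV // andbT.
  have -> : k^-1 * k ^ u^-1 = (u ^ k) * u^-1.
    by rewrite !conjgE invgK !mulgA.
  rewrite groupM ?groupV // memJ_norm //.
  by apply: (subsetP nSG); apply: (subsetP sKG).
have ck : u \in 'C[k].
  apply/cent1P; move: w1; rewrite conjgE invgK.
  move/(congr1 (fun w => k * w * u)); rewrite mulKVg mulg1 -!mulgA mulVg mulg1.
  by [].
have sSC : S \subset 'C[k] by apply: subset_trans (prime_gen pS Su nu) _; rewrite cycle_subG.
have -> : g = k by rewrite gk conj_comm //; apply/cent1P; rewrite cent1C (subsetP sSC).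
rewrite -(conj_comm (_ : commute k z)) ?memJ_conjg //.
by apply/cent1P; rewrite cent1C (subsetP sSC).
Qed.

Lemma key (gT : finGroupType) (G S : {group gT}) (r t l : gT) :
  regular_map G r t l -> S <| G -> prime #|S| -> (2 < #|S|)%N ->
  coprime #|S| #|G : S| ->
  coprime #|S| #[r * t] -> coprime #|S| #[r * l] -> False.
Proof.
case=> [[Gr Gt Gl] [or ot ol] ctl defG] nsSG pS S3 coSG co1 co2.
have [sSG nSG] := andP nsSG.
have hallS : Hall G S by rewrite /Hall sSG.
have [K] := splitsP (SchurZassenhaus_split hallS nsSG).
case/complP => tiSK defSK.
have sKG : K \subset G by rewrite -defSK mulG_subr.
have cycS := prime_cyclic pS.
have coS2 : coprime #|S| 2.
  rewrite prime_coprime //; apply/negP => /dvdn_leq.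
  by move=> /(_ isT); rewrite leqNgt S3.
have coD : forall a b, #[a] = 2%N -> #[b] = 2%N -> a \in G -> b \in G ->
    coprime #|S| #[a * b] -> exists2 x, x \in S & <<[set a; b]>> \subset K :^ x.
  move=> a b oa ob Ga Gb co.
  apply: (conj_in (D := <<[set a; b]>>%G) nsSG cycS tiSK defSK).
    rewrite gen_subG; apply/subsetP => w; rewrite !inE => /orP[]/eqP-> //.
  apply: coprime_dvdr (pair_card oa ob) _.
  by rewrite coprimeMr coS2.
have ll : l * l = 1 by rewrite -{1}(inv_invol ol) mulVg.
have tt : t * t = 1 by rewrite -{1}(inv_invol ot) mulVg.
have co3 : coprime #|S| #[t * l].
  apply: coprime_dvdr coS2; rewrite order_dvdn; apply/eqP.
  by rewrite expgS expg1 {2}ctl mulgA -(mulgA t) ll mulg1 tt.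
have [x1 Sx1 s1] := coD r t or ot Gr Gt co1.
have [x2 Sx2 s2] := coD r l or ol Gr Gl co2.
have [x3 Sx3 s3] := coD t l ot ol Gt Gl co3.
have inP : forall a b (B : {set gT}), <<[set a; b]>> \subset B -> a \in B /\ b \in B.
  move=> a b B sB; split; apply: (subsetP sB); apply: mem_gen; rewrite !inE eqxx ?orbT //.
have [r1 t1] := inP _ _ _ s1.
have [r2 l2] := inP _ _ _ s2.
have [t3 l3] := inP _ _ _ s3.
have [z Sz [rz tz lz]] : exists2 z, z \in S & [/\ r \in K :^ z, t \in K :^ z & l \in K :^ z].
  have ci := compl_int nsSG pS tiSK sKG.
  case: (eqVneq (K :^ x2) (K :^ x3)) => e23.
    case: (eqVneq (K :^ x1) (K :^ x2)) => e12.
      by exists x1 => //; split => //; rewrite e12.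
    exists x2 => //; split => //.
    by apply: (ci x1 x3) => //; rewrite -e23.
  exists x1 => //; split => //.
  exact: (ci x2 x3).
have sGK : G \subset K :^ z.
  rewrite defG gen_subG; apply/subsetP => w; rewrite !inE.
  by case/orP => [/orP[]/eqP->|/eqP->].
have := subset_leq_card sGK; rewrite cardJg -defSK TI_cardMg //.
rewrite -{2}(mul1n #|K|) leq_pmul2r ?cardG_gt0 //.
by rewrite leqNgt (ltn_trans _ S3).
Qed.

Lemma sylow_card_s (gT : finGroupType) (G P : {group gT}) s :
  prime s -> s %| #|G| -> ~~ (s * s %| #|G|) -> s.-Sylow(G) P -> #|P| = s.
Proof.
move=> ps sG nsG sylP.
rewrite (card_Hall sylP) p_part.
have l1 : 1 <= logn s #|G| by rewrite -pfactor_dvdn ?expn1 ?cardG_gt0.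
have l2 : logn s #|G| < 2.
  by rewrite ltnNge -pfactor_dvdn ?cardG_gt0 // -mulnn /= expnS expn1.
by have -> : logn s #|G| = 1%N by apply/eqP; rewrite eqn_leq l1 -ltnS l2.
Qed.

Lemma sylow_count (gT : finGroupType) (G : {group gT}) (r t l : gT) s :
  regular_map G r t l -> prime s -> (2 < s)%N -> s %| #|G| ->
  ~~ (s * s %| #|G|) -> coprime s #[r * t] -> coprime s #[r * l] ->
  exists n, [/\ (1 < n)%N, n %% s = 1%N & n * s %| #|G|].
Proof.
move=> reg ps s2 sG nsG co1 co2.
have [P sylP] := Sylow_exists s G.
have cP := sylow_card_s ps sG nsG sylP.
exists #|'Syl_s(G)|; split; last first.
- rewrite (card_Syl sylP) -cP.
  have sNG : 'N_G(P) \subset G := subsetIl _ _.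
  rewrite -(Lagrange sNG).
  rewrite [X in _ %| X]mulnC dvdn_pmul2l ?cardG_gt0 ?indexg_gt0 //.
  by apply: cardSg; rewrite subsetI (pHall_sub sylP) normG.
- exact: card_Syl_mod.
rewrite ltn_neqAle eq_sym; apply/andP; split.
  apply/negP => /normal_sylowP [Q sylQ nQG].
  have cQ := sylow_card_s ps sG nsG sylQ.
  apply: (key reg nQG); rewrite ?cQ //.
  by have /andP[_] := pHall_Hall sylQ; rewrite cQ.
have := card_Syl_mod G ps.
by case: #|'Syl_s(G)| => //; rewrite mod0n.
Qed.
End GroupPart.

Section Euler.
Import GRing.Theory Num.Theory.
Lemma euler_nat (gT : finGroupType) (G : {group gT}) (r t l : gT) p q m :
  euler_char G r t l = (- ((p * q)%N)%:R : rat)%R ->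
  #|G| = (m * (p * q))%N -> (0 < p * q)%N ->
  (m * #[r * t]%g * #[r * l]%g = 4 * #[r * t]%g * #[r * l]%g + 2 * m * #[r * t]%g + 2 * m * #[r * l]%g)%N.
Proof.
rewrite /euler_char => eul hG pq0.
set x := #[r * t]%g in eul *; set y := #[r * l]%g in eul *.
have x0 : (0 < x)%N by apply: order_gt0.
have y0 : (0 < y)%N by apply: order_gt0.
apply/eqP; rewrite -(eqr_nat rat); apply/eqP.
have hX : (x%:R : rat) != 0%R by rewrite pnatr_eq0 -lt0n.
have hY : (y%:R : rat) != 0%R by rewrite pnatr_eq0 -lt0n.
have hP : ((p * q)%N%:R : rat) != 0%R by rewrite pnatr_eq0 -lt0n.
have h4 : (4 : rat) != 0%R by [].
move: eul; rewrite hG.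
set X := (x%:R : rat) in hX *; set Y := (y%:R : rat) in hY *.
set PQ := ((p * q)%N%:R : rat) in hP *.
rewrite natrM -/PQ => eul.
have H : (m%:R * PQ * (X * Y - 2 * X - 2 * Y) = PQ * (4 * X * Y))%R.
  move: eul; move/(congr1 (fun z => - z * (4 * X * Y)))%R.
  rewrite !mulNr !opprK mulfVK ?mulf_neq0 //.
rewrite !natrD !natrM.
apply: (mulfI hP).
have -> : (2%:R : rat) = 2%R by [].
have -> : (4%:R : rat) = 4%R by [].
rewrite -/X -/Y.
apply/eqP; rewrite -subr_eq0; apply/eqP.
clearbody X Y PQ.
have e : (PQ * (m%:R * X * Y) - PQ * (4 * X * Y + 2 * m%:R * X + 2 * m%:R * Y) =
   (m%:R * PQ * (X * Y - 2 * X - 2 * Y) - PQ * (4 * X * Y)) :> rat)%R by ring.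
by rewrite e H subrr.
Qed.
End Euler.

Lemma not_sq_q (m p q : nat) : prime p -> prime q -> (p < q)%N -> (0 < m)%N -> (m < q)%N ->
  ~~ (q * q %| m * (p * q))%N.
Proof.
move=> pp pq pltq m0 mq.
rewrite mulnA dvdn_pmul2r ?prime_gt0 // Euclid_dvdM // negb_or; apply/andP; split.
  by apply/negP => /(dvdn_leq m0); rewrite leqNgt mq.
by apply/negP => /(dvdn_leq (prime_gt0 pp)); rewrite leqNgt pltq.
Qed.
Lemma not_sq_p (m p q : nat) : prime p -> prime q -> (p < q)%N -> (0 < m)%N -> (m < p)%N ->
  ~~ (p * p %| m * (p * q))%N.
Proof.
move=> pp pq pltq m0 mp.
have -> : (m * (p * q) = (m * q) * p)%N by lia.
rewrite dvdn_pmul2r ?prime_gt0 // Euclid_dvdM // negb_or; apply/andP; split.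
  by apply/negP => /(dvdn_leq m0); rewrite leqNgt mp.
by rewrite dvdn_prime2 // neq_ltn pltq.
Qed.

Theorem theorem3p1 :
  exists s : seq (nat * nat * nat * nat),
    forall x y p q : nat,
      prime p -> prime q -> (5 <= p)%N -> (p < q)%N ->
      (exists (gT : finGroupType) (G : {group gT}) (r t l : gT),
          [/\ regular_map G r t l,
              map_type r t l = (x, y),
              euler_char G r t l = (- ((p * q)%N)%:R : rat)%R
            & (p * q %| #|G|)%N]) ->
      (x, y, p, q) \in s.
Proof.
exists [seq (val z.1.1.1, val z.1.1.2, val z.1.2, val z.2) |
         z <- enum {: 'I_3401 * 'I_3401 * 'I_3401 * 'I_(3400 * 84).+1}].
move=> x y p q pp pq p5 pltq [gT [G [r [t [l [reg mt eul dvd]]]]]].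
case: mt => ex ey.
have pq0 : (0 < p * q)%N by rewrite muln_gt0 !prime_gt0.
have hG : #|G| = (#|G| %/ (p * q) * (p * q))%N by rewrite divnK.
move: hG; set m := (#|G| %/ (p * q))%N => hG.
clearbody m.
have E := euler_nat eul hG pq0.
rewrite ex ey in E.
have x0 : (0 < x)%N by rewrite -ex order_gt0.
have y0 : (0 < y)%N by rewrite -ey order_gt0.
have [m1 m84 x34 y34] := arith2 x0 y0 E.
have cop : forall s, prime s -> (3400 < s)%N -> coprime s #[r * t]%g && coprime s #[r * l]%g.
  move=> s ps s34; rewrite ex ey !prime_coprime //; apply/andP; split; apply/negP.
    by move/(dvdn_leq x0); rewrite leqNgt (leq_ltn_trans x34 s34).
  by move/(dvdn_leq y0); rewrite leqNgt (leq_ltn_trans y34 s34).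
have Sq : (3400 < q)%N -> exists A, [/\ (1 < A)%N, A %% q = 1%N & (A %| p * m)%N].
  move=> q34.
  have /andP[c1 c2] := cop q pq q34.
  have q2 : (2 < q)%N by apply: leq_ltn_trans q34.
  have qG : (q %| #|G|)%N by apply: dvdn_trans dvd; apply: dvdn_mull.
  have nq : ~~ (q * q %| #|G|)%N.
    rewrite hG; apply: not_sq_q => //; lia.
  have [n [n1 nm nd]] := sylow_count reg pq q2 qG nq c1 c2.
  exists n; split => //.
  move: nd; rewrite hG.
  have -> : (m * (p * q) = (p * m) * q)%N by lia.
  by rewrite dvdn_pmul2r ?prime_gt0.
have Sp : (3400 < p)%N -> exists B, [/\ (1 < B)%N, B %% p = 1%N & (B %| q * m)%N].
  move=> p34.
  have /andP[c1 c2] := cop p pp p34.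
  have p2 : (2 < p)%N by apply: leq_ltn_trans p34.
  have pG : (p %| #|G|)%N by apply: dvdn_trans dvd; apply: dvdn_mulr.
  have np : ~~ (p * p %| #|G|)%N.
    rewrite hG; apply: not_sq_p => //; lia.
  have [n [n1 nm nd]] := sylow_count reg pp p2 pG np c1 c2.
  exists n; split => //.
  move: nd; rewrite hG.
  have -> : (m * (p * q) = (q * m) * p)%N by lia.
  by rewrite dvdn_pmul2r ?prime_gt0.
have p34 : (p <= 3400)%N.
  case: (leqP p 3400) => // hp; exfalso.
  have [A [A1 Am dA]] := Sq (ltn_trans hp pltq).
  have [B [B1 Bm dB]] := Sp hp.
  have p168 : (168 < p)%N by lia.
  exact: (arith3 pp pq p168 pltq m1 m84 A1 Am dA B1 Bm dB).
have qb : (q <= 3400 * 84)%N.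
  case: (leqP q (3400 * 84)) => // hq; exfalso.
  have [A [A1 Am dA]] := Sq (ltn_trans (isT : (3400 < 3400 * 84)%N) hq).
  have := big_mod1 A1 Am.
  have pm0 : (0 < p * m)%N by rewrite muln_gt0 prime_gt0.
  have := dvdn_leq pm0 dA.
  have : (p * m <= 3400 * 84)%N by rewrite leq_mul.
  lia.
have hx : (x < 3401)%N by lia.
have hy : (y < 3401)%N by lia.
have hp : (p < 3401)%N by lia.
have hq : (q < (3400 * 84).+1)%N by lia.
apply/mapP; exists (Ordinal hx, Ordinal hy, Ordinal hp, Ordinal hq) => //.
by rewrite mem_enum.
Qed.
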